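(* There is a universal constant $\beta>1$ such that the following holds. Let $k\ge1$ be an integer and $0<\gamma,\epsilon<1/2$, and put $r=\beta\cdot(1/\gamma)\cdot\log(k/\epsilon)$. Let $S_1,\dots,S_\ell\subseteq[n]$ be an $r$-spread sequence of $\ell\ge r^k$ sets, each of size $k$. Let $X$ be uniformly random in $[\ell]$, and, for a fixed integer $s$ with $\gamma n\le s\le n$, let $W$ be a uniformly random subset of $[n]$ of size $s$, independent of $X$. Then $\mathbb{E}[|\chi(X,W)|]<\epsilon$. In particular, $\Pr_W[\exists y\in[\ell]:\ S_y\subseteq W]>1-\epsilon$.
   Context: A sequence (repetitions allowed) of sets $S_1,\dots,S_\ell\subseteq[n]$, each of size $k$, is called $r$-spread if for every non-empty set $Z\subseteq[n]$, the number of indices $i\in[\ell]$ with $Z\subseteq S_i$ is at most $r^{k-|Z|}$. For $x\in[\ell]$ and $W\subseteq[n]$, $\chi(x,W)$ denotes $S_y\setminus W$, where $y\in[\ell]$ is chosen to minimize $|S_y\setminus W|$ among all $y$ with $S_y\subseteq S_x\cup W$, ties broken by taking the smallest such $y$. All logarithms are base $2$. *)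

(* Defs.v *)
From mathcomp Require Import all_boot.
From Stdlib Require Import Reals.
Set Implicit Arguments. Unset Strict Implicit. Unset Printing Implicit Defensive.

Definition log2 (x : R) : R := (ln x / ln 2)%R.

Definition uniform_k (n l k : nat) (S : 'I_l -> {set 'I_n}) : Prop :=
  forall i, #|S i| = k.

Definition spread (n l k : nat) (r : R) (S : 'I_l -> {set 'I_n}) : Prop :=
  forall Z : {set 'I_n}, Z != set0 ->
    (INR #|[set i | Z \subset S i]| <= r ^ (k - #|Z|))%R.

Definition is_best (n l : nat) (S : 'I_l -> {set 'I_n}) (x : 'I_l)
    (W : {set 'I_n}) (y : 'I_l) : bool :=
  (S y \subset S x :|: W) &&
  [forall z : 'I_l, (S z \subset S x :|: W) ==> (#|S y :\: W| <= #|S z :\: W|)].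

(* The smallest such minimizer (enum 'I_l lists 0,1,...,l-1 in order);
   x itself is a candidate, so such a y always exists. *)
Definition chi_idx (n l : nat) (S : 'I_l -> {set 'I_n}) (x : 'I_l)
    (W : {set 'I_n}) : 'I_l :=
  nth x (enum 'I_l) (find (is_best S x W) (enum 'I_l)).

Definition chi (n l : nat) (S : 'I_l -> {set 'I_n}) (x : 'I_l)
    (W : {set 'I_n}) : {set 'I_n} :=
  S (chi_idx S x W) :\: W.

Definition expected_chi (n l : nat) (S : 'I_l -> {set 'I_n}) (s : nat) : R :=
  (INR (\sum_(x : 'I_l) \sum_(W : {set 'I_n} | #|W| == s) #|chi S x W|)
   / (INR l * INR 'C(n, s)))%R.

Definition prob_covered (n l : nat) (S : 'I_l -> {set 'I_n}) (s : nat) : R :=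
  (INR #|[set W : {set 'I_n} | (#|W| == s) && [exists y : 'I_l, S y \subset W]]|
   / INR 'C(n, s))%R.

(* Main.v *)
Require Import Defs.
From mathcomp Require Import all_boot zify.
From Stdlib Require Import Reals Lra Lia.
Delimit Scope nat_scope with N.
Set Implicit Arguments. Unset Strict Implicit. Unset Printing Implicit Defensive.

Lemma card_pairs_le (I J : finType) (A : {set I * J}) (M : I -> nat) :
  (forall i, #|[set j | (i, j) \in A]| <= M i) -> #|A| <= \sum_i M i.
Proof.
move=> HM.
rewrite -sum1_card big_mkcond (eq_bigr (fun p => if (p.1, p.2) \in A then 1 else 0)); last by move=> [i j].
rewrite -(pair_bigA _ (fun i j => if (i, j) \in A then 1 else 0)) /=.
apply: leq_sum => i _; apply: leq_trans (HM i).
rewrite -big_mkcond -sum1_card /=; apply: eq_leq; apply: eq_bigl => j; by rewrite inE.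
Qed.

Lemma setUD_cancel (T : finType) (A B : {set T}) : (A :|: B) :\: (B :\: A) = A.
Proof. by apply/setP=> e; rewrite !inE; case: (e \in A); case: (e \in B). Qed.

Lemma card_UD (T : finType) (A B : {set T}) : #|A :|: B| = #|A| + #|B :\: A|.
Proof.
have := cardsID A B; rewrite cardsU setIC; have := subset_leq_card (subsetIl B A). lia.
Qed.

Section Sup.
Variable n : nat.
Definition sup (V : {set 'I_n}) u := [set P : {set 'I_n} | (V \subset P) && (#|P| == u)].

Lemma card_sup (V : {set 'I_n}) u : #|V| <= u -> #|sup V u| = 'C(n - #|V|, u - #|V|).
Proof.
move=> Vu.
have -> : sup V u = (fun Q => Q :|: V) @: [set Q : {set 'I_n} | (Q \subset ~: V) && (#|Q| == u - #|V|)].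
  apply/setP=> P; rewrite inE; apply/andP/imsetP.
    move=> [VP /eqP HP]; exists (P :\: V); last by apply/setP=> i; rewrite !inE; case Hi: (i \in V); rewrite /= ?orbT ?orbF // (subsetP VP).
    rewrite inE subDset setUCr subsetT /=.
    by rewrite -HP -(cardsID V P) (setIidPr VP) addKn.
  move=> [Q]; rewrite inE => /andP[QV /eqP HQ] ->; split; first exact: subsetUr.
  rewrite cardsU HQ (_ : Q :&: V = set0) ?cards0 ?subn0 ?subnK //.
  by apply/eqP; rewrite setI_eq0 disjoints_subset.
rewrite card_in_imset.
  rewrite cards_draws; congr 'C(_, _).
  by rewrite cardsCs setCK card_ord.
move=> Q1 Q2; rewrite !inE => /andP[H1 _] /andP[H2 _] E.
have K : forall Q : {set 'I_n}, Q \subset ~: V -> (Q :|: V) :\: V = Q.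
  by move=> Q HQ; rewrite setDUl setDv setU0; apply/setDidPl; rewrite disjoints_subset.
by rewrite -(K _ H1) E K.
Qed.
End Sup.

Section DC.
Variable n : nat.
Lemma dcount (t sg : nat) (F : {set 'I_n} -> nat) :
  \sum_(W : {set 'I_n} | #|W| == t) 'C(t, sg) * F W =
  \sum_(V : {set 'I_n} | #|V| == sg) \sum_(W in sup V t) F W.
Proof.
rewrite (exchange_big_dep (fun W : {set 'I_n} => #|W| == t)) /=; last first.
  by move=> V W _; rewrite inE => /andP[].
apply: eq_bigr => W /eqP HW.
rewrite (eq_bigl (mem [set V : {set 'I_n} | (V \subset W) && (#|V| == sg)])).
  by rewrite sum_nat_const cards_draws HW.
by move=> V; rewrite !inE HW eqxx andbT andbC.
Qed.
End DC.

Lemma natRM (a b : nat) : INR (a * b)%N = (INR a * INR b)%R.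
Proof. exact: mult_INR. Qed.
Lemma natRD (a b : nat) : INR (a + b)%N = (INR a + INR b)%R.
Proof. exact: plus_INR. Qed.
Lemma natRle (a b : nat) : (a <= b)%N -> (INR a <= INR b)%R.
Proof. by move/leP; apply: le_INR. Qed.
Lemma natRlt (a b : nat) : (a < b)%N -> (INR a < INR b)%R.
Proof. by move/ltP; apply: lt_INR. Qed.
Lemma natRexp (a b : nat) : INR (expn a b) = (INR a ^ b)%R.
Proof. by rewrite -pow_INR; congr INR; elim: b => // b IH; rewrite expnS IH. Qed.

Local Open Scope R_scope.
Lemma binratio (N d j : nat) :
  INR 'C(N, d + j) <= INR 'C(N, d) * (INR N / INR (d + 1)) ^ j.
Proof.
elim: j => [|j IH]; first by rewrite addn0 /=; lra.
have E := mul_bin_left N (d + j).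
have Hm : (0 < INR (d + j).+1) by apply: lt_0_INR; apply/ltP.
have Hd : (0 < INR (d + 1)) by apply: lt_0_INR; apply/ltP; rewrite addn1.
have E' : INR (d + j).+1 * INR 'C(N, (d + j).+1) = INR (N - (d + j)) * INR 'C(N, d + j).
  by rewrite -!natRM E.
have H1 : INR (N - (d + j)) <= INR N by apply: natRle; apply: leq_subr.
have H2 : INR (d + 1) <= INR (d + j).+1 by apply: natRle; lia.
have H0 : 0 <= INR 'C(N, d + j) by apply: pos_INR.
have HN : 0 <= INR N by apply: pos_INR.
set q := INR N / INR (d + 1).
have Hq : 0 <= q by rewrite /q; apply: Rle_mult_inv_pos.
rewrite addnS /=.
set C1 := INR 'C(N, (d + j).+1) in E' *.
set C0 := INR 'C(N, d + j) in E' H0 IH *.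
have : INR (d + 1) * C1 <= INR N * C0.
  apply: Rle_trans (_ : INR (d + j).+1 * C1 <= _).
    apply: Rmult_le_compat_r => //; rewrite /C1; apply: pos_INR.
  rewrite E'; apply: Rmult_le_compat_r => //.
move=> H3.
have H4 : C1 <= q * C0.
  rewrite /q; apply: (Rmult_le_reg_l (INR (d + 1))) => //.
  replace (INR (d + 1) * (INR N / INR (d + 1) * C0)) with (INR N * C0); first lra.
  field; lra.
apply: Rle_trans H4 _.
have H5 := Rmult_le_compat_l q _ _ Hq IH.
apply: Rle_trans H5 _; right; rewrite /q; ring.
Qed.

Lemma INR_bigmax_le (I : finType) (P : pred I) (F : I -> nat) (B : R) :
  0 <= B -> (forall i, P i -> INR (F i) <= B) -> INR (\max_(i | P i) F i) <= B.
Proof.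
move=> B0 H; apply: (big_ind (fun m => INR m <= B)) => //.
by move=> x y Hx Hy; rewrite /maxn; case: ltnP.
Qed.

Lemma pow_decr (x : R) (m p : nat) : 0 <= x <= 1 -> (m <= p)%N -> x ^ p <= x ^ m.
Proof.
move=> [H0 H1] mp.
have E : x ^ p = x ^ m * x ^ (p - m) by rewrite -pow_add; congr (x ^ _); lia.
have H2 : x ^ (p - m) <= 1 by rewrite -(pow1 (p - m)); apply: pow_incr; lra.
have H3 : 0 <= x ^ m by apply: pow_le.
have H4 : 0 <= x ^ (p - m) by apply: pow_le.
rewrite E; nra.
Qed.

Lemma div_pow (x y : R) (m : nat) : x ^ m / y ^ m = (x / y) ^ m.
Proof. by rewrite /Rdiv Rpow_mult_distr pow_inv. Qed.
Local Close Scope R_scope.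

Section Comb.
Variables (n l k : nat) (S : 'I_l -> {set 'I_n}).
Hypothesis Hk : forall i, #|S i| = k.

Definition adm x (V : {set 'I_n}) z := S z \subset S x :|: V.
Definition yv (V : {set 'I_n}) x := [arg min_(z < x | adm x V z) #|S z :\: V|].
Definition mv (V : {set 'I_n}) x := #|S (yv V x) :\: V|.

Lemma yvP (V : {set 'I_n}) x : adm x V (yv V x) /\ forall z, adm x V z -> mv V x <= #|S z :\: V|.
Proof.
rewrite /mv /yv; case: (@arg_minnP _ x (adm x V) (fun z => #|S z :\: V|) (subsetUl _ _)).
by move=> y Hy Hm; split.
Qed.

Definition cov (V : {set 'I_n}) := [exists z, S z \subset V].

Lemma mv0 (V : {set 'I_n}) x : (mv V x == 0) = cov V.
Proof.
have [Ha Hm] := yvP V x.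
apply/idP/idP.
  rewrite cards_eq0 setD_eq0 => H; apply/existsP; by exists (yv V x).
case/existsP=> z Hz; have: adm x V z by rewrite /adm; apply: subset_trans Hz (subsetUr _ _).
move/Hm; rewrite (_ : S z :\: V = set0); first by rewrite cards0 leqn0.
by apply/eqP; rewrite setD_eq0.
Qed.

Lemma mv_mono (V W : {set 'I_n}) x : V \subset W -> mv W x <= mv V x.
Proof.
move=> VW; have [Ha _] := yvP V x; have [_ Hm] := yvP W x.
apply: leq_trans (Hm _ _) _.
  by apply: subset_trans Ha _; apply: setUS.
by apply: subset_leq_card; apply: setDS.
Qed.

Lemma mv_leS (V : {set 'I_n}) x : mv V x <= #|S x|.
Proof.
have [_ Hm] := yvP V x; apply: leq_trans (Hm x (subsetUl _ _)) _.
by apply: subset_leq_card; apply: subsetDl.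
Qed.


Definition ya a (V W : {set 'I_n}) x :=
  [arg min_(z < yv V x | (S z \subset S x :|: W) && (#|S z :\: V| <= a)) #|S z :\: W|].

Lemma yaP a (V W : {set 'I_n}) x : V \subset W -> mv V x <= a ->
  [/\ S (ya a V W x) \subset S x :|: W, #|S (ya a V W x) :\: V| <= a &
   forall z, S z \subset S x :|: W -> #|S z :\: V| <= a ->
     #|S (ya a V W x) :\: W| <= #|S z :\: W|].
Proof.
move=> VW Ha.
have [H1 _] := yvP V x.
have P0 : (S (yv V x) \subset S x :|: W) && (#|S (yv V x) :\: V| <= a).
  by rewrite Ha andbT; apply: subset_trans H1 _; apply: setUS.
rewrite /ya; case: (@arg_minnP _ (yv V x) (fun z => (S z \subset S x :|: W) && (#|S z :\: V| <= a)) (fun z => #|S z :\: W|) P0).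
move=> y /andP[Hy1 Hy2] Hm; split => // z Hz1 Hz2; apply: Hm; by rewrite Hz1.
Qed.

Definition A0 a (V P : {set 'I_n}) : {set 'I_n} :=
  if [pick z | (S z \subset P) && (#|S z :\: V| <= a)] is Some z then S z :\: V else set0.

Lemma A0_card a (V P : {set 'I_n}) : #|A0 a V P| <= a.
Proof. by rewrite /A0; case: pickP => [z /andP[_ ->] | _] //; rewrite cards0. Qed.

Definition cmax b := \max_(Z : {set 'I_n} | #|Z| == b) #|[set x | Z \subset S x]|.

Definition Dset (V : {set 'I_n}) t a b :=
  [set p : 'I_l * {set 'I_n} | [&& V \subset p.2, #|p.2| == t, mv V p.1 <= a & b <= mv p.2 p.1]].

Lemma piece (V : {set 'I_n}) t a b b' :
  #|[set p in Dset V t a b | #|S (ya a V p.2 p.1) :\: p.2| == b']|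
   <= #|sup V (t + b')| * 'C(a, b') * cmax b'.
Proof.
set D := [set p in _ | _].
pose f (p : 'I_l * {set 'I_n}) := (p.2 :|: S (ya a V p.2 p.1), S (ya a V p.2 p.1) :\: p.2, p.1).
pose E := [set e : {set 'I_n} * {set 'I_n} * 'I_l | [&& e.1.1 \in sup V (t + b'),
   e.1.2 \subset A0 a V e.1.1, #|e.1.2| == b' & e.1.2 \subset S e.2]].
have inj : {in D &, injective f}.
  move=> [x1 W1] [x2 W2] _ _ [E1 E2 E3].
  by rewrite -(setUD_cancel W1 (S (ya a V W1 x1))) E1 E2 setUD_cancel E3.
have sub : f @: D \subset E.
  apply/subsetP=> e /imsetP[[x W]]; rewrite !inE /= => /andP[/and4P[VW /eqP tW Ha Hb] /eqP Hb'] ->.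
  have [Hy1 Hy2 Hy3] := yaP VW Ha.
  rewrite /f /=.
  set y := ya a V W x in Hy1 Hy2 Hy3 Hb' *.
  have Hchi : S y :\: W \subset S x.
    apply/subsetP=> i; rewrite inE => /andP[He1 He2].
    by move: (subsetP Hy1 i He2); rewrite inE (negbTE He1) orbF.
  rewrite Hb' eqxx Hchi andbT card_UD tW Hb' eqxx andbT.
  rewrite (subset_trans VW (subsetUl _ _)) /=.
  rewrite /A0; case: pickP => [z /andP[Hz1 Hz2] | Hnone]; last first.
    by move: (Hnone y); rewrite subsetUr Hy2.
  have Hz3 : S z \subset S x :|: W.
    apply: subset_trans Hz1 _; apply/subsetP=> i; rewrite !inE => /orP[-> | He]; first by rewrite orbT.
    by move: (subsetP Hy1 i He); rewrite inE.
  have Hm := Hy3 z Hz3 Hz2.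
  have Hs : S z :\: W \subset S y :\: W.
    apply/subsetP=> i; rewrite !inE => /andP[He1 He2]; rewrite He1 /=.
    by move: (subsetP Hz1 i He2); rewrite inE (negbTE He1).
  have Heq : S z :\: W = S y :\: W.
    by apply/eqP; rewrite eqEcard Hs Hm.
  by rewrite -Heq andbT; apply: setDS.
rewrite -(card_in_imset inj); apply: leq_trans (subset_leq_card sub) _.
apply: leq_trans (card_pairs_le (M := fun pc : {set 'I_n} * {set 'I_n} => if [&& pc.1 \in sup V (t + b'),
   pc.2 \subset A0 a V pc.1 & #|pc.2| == b'] then cmax b' else 0) _) _.
  move=> [P c]; rewrite /=; case: ifP => H.
    rewrite (_ : [set x | ((P, c), x) \in E] = [set x | c \subset S x]); last first.
      by apply/setP=> x; rewrite !inE /=; move: H; rewrite inE => /and3P[-> -> ->].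
    rewrite /cmax; apply: (@leq_bigmax_cond _ (fun Z : {set 'I_n} => #|Z| == b') (fun Z => #|[set x | Z \subset S x]|) c).
    by move: H => /and3P[_ _ ->].
  rewrite leqn0 cards_eq0; apply/eqP/setP=> x; rewrite !inE /=.
  apply/negbTE; move: H; rewrite inE; apply: contraFN => /and4P[h1 h2 h3 _]; by rewrite h1 h2 h3.
rewrite -big_mkcond /= sum_nat_const; apply: leq_mul => //.
rewrite (_ : #|_| = #|[set pc : {set 'I_n} * {set 'I_n} | [&& pc.1 \in sup V (t + b'),
   pc.2 \subset A0 a V pc.1 & #|pc.2| == b']]|); last by apply: eq_card => pc; rewrite inE.
apply: leq_trans (card_pairs_le (M := fun P : {set 'I_n} => if P \in sup V (t + b') then 'C(a, b') else 0) _) _.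
  move=> P; case: ifP => H.
    rewrite (_ : [set c | (P, c) \in _] = [set c : {set 'I_n} | (c \subset A0 a V P) && (#|c| == b')]).
      by rewrite cards_draws leq_bin2l // A0_card.
    by apply/setP=> c; rewrite !inE /=; move: H; rewrite inE => ->.
  rewrite leqn0 cards_eq0; apply/eqP/setP=> c; rewrite !inE /=; move: H; rewrite inE => -> //.
by rewrite -big_mkcond /= sum_nat_const.
Qed.

Lemma bb_bounds (V : {set 'I_n}) t a b p : p \in Dset V t a b ->
  b <= #|S (ya a V p.2 p.1) :\: p.2| <= a.
Proof.
case: p => x W; rewrite inE /= => /and4P[VW _ Ha Hb].
have [Hy1 Hy2 _] := yaP VW Ha.
have [_ Hm] := yvP W x.
rewrite (leq_trans Hb (Hm _ Hy1)) /=.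
apply: leq_trans Hy2; apply: subset_leq_card; exact: setDS.
Qed.

Lemma encode (V : {set 'I_n}) t a b :
  #|Dset V t a b| <= \sum_(b' < a.+1 | b <= b') #|sup V (t + b')| * 'C(a, b') * cmax b'.
Proof.
pose bb (p : 'I_l * {set 'I_n}) := #|S (ya a V p.2 p.1) :\: p.2|.
rewrite -sum1_card (partition_big (fun p => inord (bb p) : 'I_a.+1) (fun j : 'I_a.+1 => b <= j)) /=; last first.
  move=> p Hp; have /andP[H1 H2] := bb_bounds Hp; by rewrite inordK.
apply: leq_sum => j _.
apply: leq_trans (piece V t a b j).
rewrite -sum1_card; apply: eq_leq; apply: eq_bigl => p; rewrite [in RHS]inE.
case Hp: (p \in Dset V t a b) => //=.
have /andP[_ H2] := bb_bounds Hp.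
by rewrite -(inj_eq val_inj) /= inordK.
Qed.

Definition Bn t b := \sum_(W : {set 'I_n} | #|W| == t) #|[set x | b <= mv W x]|.

Lemma Dset_sum (V : {set 'I_n}) t a b :
  \sum_(W in sup V t) #|[set x | (mv V x <= a) && (b <= mv W x)]| = #|Dset V t a b|.
Proof.
rewrite -[#|Dset V t a b|]sum1_card [RHS]big_mkcond (eq_bigr (fun p => if (p.1, p.2) \in Dset V t a b then 1 else 0)); last by move=> [i j].
rewrite -(pair_bigA _ (fun i j => if (i, j) \in Dset V t a b then 1 else 0)) /= exchange_big /=.
rewrite big_mkcond; apply: eq_bigr => W _.
rewrite -big_mkcond /= -sum1_card; case: ifP => HW.
  apply: eq_bigl => x; rewrite !inE /=; move: HW; rewrite inE => /andP[-> ->] /=; by [].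
rewrite big_pred0 // => x; rewrite !inE /=; move: HW; rewrite inE.
by case: (V \subset W); case: (#|W| == t).
Qed.

Lemma round_nat (sg t a b : nat) : 0 < b -> sg <= t ->
  l * 'C(t, sg) * Bn t b <=
  l * 'C(n - sg, t - sg) * Bn sg a.+1 +
  Bn sg 1 * \sum_(b' < a.+1 | b <= b') 'C(n - sg, t + b' - sg) * 'C(a, b') * cmax b'.
Proof.
move=> b0 st.
set X := \sum_(b' < a.+1 | b <= b') _.
rewrite -mulnA /Bn big_distrr /= dcount.
rewrite [X in X <= _]big_distrr [X in _ <= X + _]big_distrr [X in _ <= _ + X]big_distrl -big_split /=.
apply: leq_sum => V /eqP HV.
have Hcut : forall W, #|[set x | b <= mv W x]| <=
   #|[set x | a < mv V x]| + #|[set x | (mv V x <= a) && (b <= mv W x)]|.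
  move=> W; apply: leq_trans (leq_card_setU _ _).1; apply: subset_leq_card; apply/subsetP=> x.
  by rewrite !inE; case: ltnP => //= _ ->.
have H1 : \sum_(W in sup V t) #|[set x | b <= mv W x]| <= \sum_(W in sup V t)
   (#|[set x | a < mv V x]| + #|[set x | (mv V x <= a) && (b <= mv W x)]|).
  by apply: leq_sum => W _; exact: Hcut.
apply: leq_trans (leq_mul (leqnn l) H1) _.
rewrite big_split /= sum_nat_const Dset_sum mulnDr card_sup HV // mulnA leq_add2l.
case Hc: (cov V).
  rewrite (_ : #|Dset V t a b| = 0) ?muln0 //.
  apply/eqP; rewrite cards_eq0; apply/eqP/setP => [[x W]]; rewrite !inE /=.
  apply/negbTE/negP => /and4P[VW _ _ Hb].
  have := leq_trans Hb (mv_mono x VW); move/eqP: (introT eqP (mv0 V x)); rewrite Hc.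
  move=> /eqP ->; rewrite leqn0 => /eqP b00; by rewrite b00 in b0.
rewrite (_ : #|[set x | 0 < mv V x]| = l); last first.
  rewrite -[RHS](card_ord l); apply: eq_card => x; rewrite !inE lt0n mv0 Hc; by [].
rewrite leq_mul2l; apply/orP; right.
apply: leq_trans (encode V t a b) _; rewrite /X.
apply: eq_leq; apply: eq_bigr => b' _; rewrite card_sup HV ?(leq_trans st (leq_addr _ _)) //.
Qed.

Lemma Bn_le t b : Bn t b <= 'C(n, t) * l.
Proof.
have H : forall W, #|[set x | b <= mv W x]| <= l.
  by move=> W; rewrite -[X in _ <= X](card_ord l); apply: max_card.
rewrite /Bn; apply: leq_trans (_ : \sum_(W : {set 'I_n} | #|W| == t) l <= _).
  by apply: leq_sum => W _; apply: H.
rewrite -[X in 'C(X, _)](card_ord n) -card_draws -sum_nat_const; apply: eq_leq.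
by apply: eq_bigl => W; rewrite inE.
Qed.

Lemma Bn_big t b : k < b -> Bn t b = 0.
Proof.
move=> kb; rewrite /Bn big1 // => W _; apply/eqP; rewrite cards_eq0; apply/eqP/setP=> x.
rewrite !inE; apply/negbTE; rewrite -ltnNge; apply: leq_ltn_trans (mv_leS W x) _.
by rewrite Hk.
Qed.

Lemma Bn1 t : Bn t 1 = l * #|[set W : {set 'I_n} | (#|W| == t) && ~~ cov W]|.
Proof.
rewrite /Bn mulnC -sum_nat_const big_mkcond [RHS]big_mkcond; apply: eq_bigr => W _.
rewrite inE; case: (#|W| == t) => //=; case Hc: (cov W) => /=.
  apply/eqP; rewrite cards_eq0; apply/eqP/setP=> x; rewrite !inE lt0n mv0 Hc; by [].
rewrite -[RHS](card_ord l); apply: eq_card=> x; rewrite !inE lt0n mv0 Hc; by [].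
Qed.

Lemma binom_id t sg : sg <= t -> 'C(n, t) * 'C(t, sg) = 'C(n, sg) * 'C(n - sg, t - sg).
Proof.
move=> st.
have := @dcount n t sg (fun _ => 1).
rewrite (eq_bigr (fun _ => 'C(t, sg))); last by move=> W _; rewrite muln1.
rewrite (eq_bigl (mem [set W : {set 'I_n} | #|W| == t])); last by move=> W; rewrite !inE.
rewrite sum_nat_const card_draws card_ord => ->.
rewrite (eq_bigr (fun _ => 'C(n - sg, t - sg))); last first.
  by move=> V /eqP HV; rewrite sum1_card card_sup HV.
rewrite (eq_bigl (mem [set V : {set 'I_n} | #|V| == sg])); last by move=> V; rewrite !inE.
by rewrite sum_nat_const card_draws card_ord.
Qed.

Lemma Xbound (N d a b : nat) :
  \sum_(b' < a.+1 | b <= b') 'C(N, d + b') * 'C(a, b') * cmax b' <=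
  expn 2 a * \max_(b' < a.+1 | b <= b') ('C(N, d + b') * cmax b').
Proof.
set M := \max_(b' < a.+1 | b <= b') _.
apply: leq_trans (_ : \sum_(b' < a.+1) 'C(a, b') * M <= _).
  rewrite big_mkcond; apply: leq_sum => b' _; case: ifP => H //.
  rewrite mulnAC mulnC leq_mul2l; apply/orP; right.
  exact: (@leq_bigmax_cond _ (fun b' : 'I_a.+1 => b <= b') (fun b' : 'I_a.+1 => 'C(N, d + b') * cmax b') b' H).
rewrite -big_distrl /= leq_mul2r; apply/orP; right.
have E2 : \sum_(i < a.+1) 'C(a, i) = expn 2 a.
  rewrite (_ : 2 = 1 + 1) // expnDn; apply: eq_bigr => i _; by rewrite !exp1n !muln1.
by rewrite E2.
Qed.

Lemma chi_idx_best x (W : {set 'I_n}) : is_best S x W (chi_idx S x W).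
Proof.
rewrite /chi_idx; apply: nth_find; apply/hasP; exists (yv W x); first by rewrite mem_enum.
have [H1 H2] := yvP W x.
rewrite /is_best; apply/andP; split; first exact: H1.
apply/forallP => z; apply/implyP => Hz; exact: H2.
Qed.

Lemma chi_le x (W : {set 'I_n}) : #|chi S x W| <= k * (0 < mv W x).
Proof.
have /andP[Hb1 /forallP Hb2] := chi_idx_best x W.
case Hm: (0 < mv W x); last first.
  move: Hm => /negbT; rewrite lt0n negbK mv0 => /existsP[z Hz].
  have := Hb2 z; rewrite (subset_trans Hz (subsetUr _ _)) /= => Hle.
  rewrite muln0 leqn0 /chi; move: Hle; rewrite (_ : S z :\: W = set0) ?cards0 ?leqn0 //.
  by apply/eqP; rewrite setD_eq0.
by rewrite muln1 /chi -(Hk (chi_idx S x W)); apply: subset_leq_card; apply: subsetDl.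
Qed.

Lemma sum_chi s : \sum_(x : 'I_l) \sum_(W : {set 'I_n} | #|W| == s) #|chi S x W| <= k * Bn s 1.
Proof.
rewrite exchange_big /= /Bn big_distrr /=; apply: leq_sum => W _.
apply: leq_trans (_ : \sum_(x : 'I_l) k * (0 < mv W x) <= _).
  by apply: leq_sum => x _; apply: chi_le.
rewrite -big_distrr /= leq_mul2l; apply/orP; right.
rewrite -sum1_card; apply: eq_leq; rewrite [RHS]big_mkcond /=; apply: eq_bigr => x _; rewrite inE; by case: (0 < mv W x).
Qed.

Lemma count_split s :
  #|[set W : {set 'I_n} | (#|W| == s) && [exists y, S y \subset W]]| +
  #|[set W : {set 'I_n} | (#|W| == s) && ~~ cov W]| = 'C(n, s).
Proof.
rewrite -[X in 'C(X, _)](card_ord n) -card_draws -(cardsID [set W : {set 'I_n} | cov W] [set A : {set 'I_n} | #|A| == s]).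
congr (_ + _); apply: eq_card => W; rewrite !inE // andbC; by case: (cov W); rewrite /= ?cardsE.
Qed.

Section RealPart.
Open Scope R_scope.
Variable r : R.
Hypothesis Hsp : spread k r S.
Hypothesis Hr : 0 < r.
Hypothesis Hl : r ^ k <= INR l.

Lemma cmax_bound (b' : nat) : (0 < b')%N -> INR (cmax b') <= INR l / r ^ b'.
Proof.
move=> b0.
have Hrb : 0 < r ^ b' by apply: pow_lt.
apply: INR_bigmax_le.
  apply: Rle_mult_inv_pos => //; apply: pos_INR.
move=> Z /eqP HZ.
case: (leqP b' k) => Hbk.
  have Z0 : Z != set0 by rewrite -card_gt0 HZ.
  apply: Rle_trans (Hsp Z0) _; rewrite HZ.
  have E : r ^ k = r ^ (k - b') * r ^ b' by rewrite -pow_add; congr (r ^ _); lia.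
  apply: (Rmult_le_reg_r (r ^ b')) => //.
  rewrite /Rdiv Rmult_assoc Rinv_l; last by apply: Rgt_not_eq.
  lra.
rewrite (_ : #|[set x | Z \subset S x]| = 0%N).
  rewrite /=; apply: Rle_mult_inv_pos => //; apply: pos_INR.
apply/eqP; rewrite cards_eq0; apply/eqP/setP => x; rewrite !inE.
apply/negbTE/negP => /subset_leq_card; rewrite HZ Hk; lia.
Qed.


Definition u t b := INR (Bn t b) / (INR l * INR 'C(n, t)).

Lemma round_R (sg t a b : nat) : (0 < b)%N -> (sg <= t)%N -> (t <= n)%N -> (0 < l)%N ->
  INR n / (INR (t - sg + 1) * r) <= 1 ->
  u t b <= u sg a.+1 + u sg 1 * (2 ^ a * (INR n / (INR (t - sg + 1) * r)) ^ b).
Proof.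
move=> b0 st tn l0 Hlam.
set lam := INR n / _ in Hlam *.
have Hlam0 : 0 <= lam.
  rewrite /lam; apply: Rle_mult_inv_pos; first by apply: pos_INR.
  apply: Rmult_lt_0_compat => //; apply: lt_0_INR; lia.
set N := (n - sg)%N; set D := (t - sg)%N.
have Hnat := round_nat a b0 st.
have HD : 0 < INR (D + 1) by apply: lt_0_INR; lia.
have HX : INR (\sum_(b' < a.+1 | (b <= b')%N) ('C(N, t + b' - sg) * 'C(a, b') * cmax b')%N)
     <= 2 ^ a * (INR l * INR 'C(N, D) * lam ^ b).
  rewrite (eq_bigr (fun b' : 'I_a.+1 => ('C(N, D + b') * 'C(a, b') * cmax b')%N)); last first.
    by move=> b' _; congr (_ * _ * _)%N; congr 'C(_, _); rewrite /D; lia.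
  apply: Rle_trans (natRle (Xbound N D a b)) _.
  rewrite natRM natRexp (_ : INR 2 = 2); last by rewrite /=; ring.
  apply: Rmult_le_compat_l; first by apply: pow_le; lra.
  apply: INR_bigmax_le.
    apply: Rmult_le_pos; last by apply: pow_le.
    apply: Rmult_le_pos; apply: pos_INR.
  move=> b' Hb'.
  have b'0 : (0 < b')%N by apply: leq_trans Hb'.
  rewrite natRM.
  have H1 := binratio N D b'.
  have H2 := cmax_bound b'0.
  have Hrb : 0 < r ^ b' by apply: pow_lt.
  set q := INR N / INR (D + 1) in H1.
  have Hq0 : 0 <= q by apply: Rle_mult_inv_pos => //; apply: pos_INR.
  apply: Rle_trans (Rmult_le_compat _ _ _ _ (pos_INR _) (pos_INR _) H1 H2) _.
  have E : INR 'C(N, D) * q ^ b' * (INR l / r ^ b') = INR l * INR 'C(N, D) * (q ^ b' / r ^ b').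
    by rewrite /Rdiv; ring.
  rewrite E div_pow; apply: Rmult_le_compat_l.
    apply: Rmult_le_pos; apply: pos_INR.
  apply: Rle_trans (_ : lam ^ b' <= _); last by apply: pow_decr.
  apply: pow_incr; split.
    apply: Rle_mult_inv_pos => //.
  rewrite /q /lam (_ : (t - sg + 1)%N = (D + 1)%N) //.
  rewrite /Rdiv Rinv_mult Rmult_assoc (Rmult_comm (/ INR (D + 1))) -Rmult_assoc -[X in _ <= X]Rmult_assoc.
  apply: Rmult_le_compat_r; first by apply: Rlt_le; apply: Rinv_0_lt_compat.
  apply: Rmult_le_compat_r; first by apply: Rlt_le; apply: Rinv_0_lt_compat.
  by apply: natRle; apply: leq_subr.
have HR := natRle Hnat.
rewrite !natRM natRD !natRM in HR.
have Hb := binom_id st.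
have HbR : INR 'C(n, t) * INR 'C(t, sg) = INR 'C(n, sg) * INR 'C(N, D) by rewrite -!natRM Hb.
have pos : forall m p : nat, (p <= m)%N -> 0 < INR 'C(m, p).
  by move=> m p pm; apply: lt_0_INR; apply/ltP; rewrite bin_gt0.
have HLn : 0 < INR l by apply: lt_0_INR; apply/ltP.
have Cnt := pos n t tn.
have Cts := pos t sg st.
have Cns := pos n sg (leq_trans st tn).
have CND : 0 < INR 'C(N, D) by apply: pos; rewrite /N /D; lia.
rewrite /u.
set Bt := INR (Bn t b) in HR *; set Bsa := INR (Bn sg a.+1) in HR *.
set Bs1 := INR (Bn sg 1) in HR *.
set X := INR (\sum_(_ < _ | _) _) in HR HX.
have HB1 : 0 <= Bs1 by apply: pos_INR.
apply: (Rmult_le_reg_r (INR l * INR l * INR 'C(n, sg) * INR 'C(N, D))).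
  by repeat apply: Rmult_lt_0_compat.
have E1 : Bt / (INR l * INR 'C(n, t)) * (INR l * INR l * INR 'C(n, sg) * INR 'C(N, D))
   = INR l * INR 'C(t, sg) * Bt.
  rewrite (_ : INR l * INR l * INR 'C(n, sg) * INR 'C(N, D) = INR l * INR l * (INR 'C(n, t) * INR 'C(t, sg))); last by rewrite HbR; ring.
  field; split; lra.
have E2 : (Bsa / (INR l * INR 'C(n, sg)) + Bs1 / (INR l * INR 'C(n, sg)) * (2 ^ a * lam ^ b)) *
   (INR l * INR l * INR 'C(n, sg) * INR 'C(N, D)) =
   INR l * INR 'C(N, D) * Bsa + Bs1 * (2 ^ a * (INR l * INR 'C(N, D) * lam ^ b)).
  field; split; lra.
rewrite E1 E2; apply: Rle_trans HR _; apply: Rplus_le_compat_l.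
by apply: Rmult_le_compat_l.
Qed.

Lemma u_nonneg t b : (0 < l)%N -> (t <= n)%N -> 0 <= u t b.
Proof.
move=> l0 tn; rewrite /u; apply: Rle_mult_inv_pos; first by apply: pos_INR.
apply: Rmult_lt_0_compat; apply: lt_0_INR; apply/ltP => //.
by rewrite bin_gt0.
Qed.

Lemma step_ineq (A al c w I1 I4 : R) :
  0 <= al <= 1/2 -> 0 <= A <= al -> 0 <= c -> 0 <= w <= A / 4 ->
  (I1 = 0 \/ (I1 = 1 /\ 2 <= c)) ->
  I4 + A ^ 4 * c + (I1 + al * c) * w <= I4 + A * c / 2.
Proof.
move=> Hal HA Hc Hw HI.
have HA3 : A ^ 4 <= A / 8.
  have : A ^ 3 <= 1 / 8.
    apply: Rle_trans (_ : (1/2) ^ 3 <= _); first by apply: pow_incr; lra.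
    simpl; lra.
  move=> H; rewrite (_ : A ^ 4 = A * A ^ 3); last by simpl; ring.
  have : 0 <= A ^ 3 by apply: pow_le; lra.
  nra.
have H1 : A ^ 4 * c <= A * c / 8.
  have := Rmult_le_compat_r c _ _ Hc HA3; lra.
have Hw8 : al * w <= A / 8.
  have : al * w <= (1/2) * (A / 4) by apply: Rmult_le_compat; lra.
  lra.
have H2 : al * c * w <= A * c / 8.
  rewrite (_ : al * c * w = (al * w) * c); last by ring.
  have := Rmult_le_compat_r c _ _ Hc Hw8; lra.
have HAc : 0 <= A * c by apply: Rmult_le_pos; lra.
have H3 : I1 * w <= A * c / 8.
  case: HI => [-> | [-> H]]; first lra.
  have : 0 <= A * (c - 2) by apply: Rmult_le_pos; lra.
  lra.
have E : (I1 + al * c) * w = I1 * w + al * c * w by ring.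
rewrite E; lra.
Qed.

Lemma inv_rounds (d R0 : nat) (al : R) : (0 < l)%N -> (R0 * d <= n)%N -> 0 <= al <= 1/2 ->
  INR n / (INR (d + 1) * r) <= al / 64 ->
  forall j, (j <= R0)%N -> forall b, (0 < b)%N ->
   u (j * d)%N b <= (if (expn 4 j * b <= k)%N then 1 else 0) + al ^ b * (2 * INR k / 2 ^ j).
Proof.
move=> l0 Rn Hal Hlam.
have Hk0 : 0 <= INR k by apply: pos_INR.
elim=> [|j IH] jR b b0.
  have Hc : 0 <= al ^ b * (2 * INR k / 2 ^ 0).
    apply: Rmult_le_pos; first by apply: pow_le; lra.
    rewrite /=; lra.
  rewrite mul0n expn0 mul1n /u bin0 /=.
  have HL : 0 < INR l by apply: lt_0_INR; apply/ltP.
  case: ifP => Hb.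
    have := natRle (Bn_le 0%N b); rewrite natRM bin0 /= => H.
    apply: Rle_trans (_ : 1 <= _); last lra.
    apply: (Rmult_le_reg_r (INR l * 1)); first lra.
    rewrite /Rdiv Rmult_assoc Rinv_l; lra.
  rewrite Bn_big; last by rewrite ltnNge Hb.
  rewrite /= /Rdiv Rmult_0_l; lra.
have jR' : (j <= R0)%N by apply: ltnW.
have tn : (j.+1 * d <= n)%N by apply: leq_trans Rn; apply: leq_mul.
have st : (j * d <= j.+1 * d)%N by apply: leq_mul.
have Ed : (j.+1 * d - j * d = d)%N by rewrite mulSn addnK.
have Hlam0 : 0 <= INR n / (INR (d + 1) * r).
  apply: Rle_mult_inv_pos; first by apply: pos_INR.
  apply: Rmult_lt_0_compat => //; apply: lt_0_INR; lia.
have Hlam1 : INR n / (INR (j.+1 * d - j * d + 1) * r) <= 1 by rewrite Ed; lra.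
have H := round_R (4 * b).-1 b0 st tn l0 Hlam1.
rewrite Ed prednK in H; last by rewrite muln_gt0.
set lam := INR n / (INR (d + 1) * r) in Hlam Hlam0 H.
have IH4 := IH jR' (4 * b)%N (leq_trans b0 (leq_pmull b (isT : (0 < 4)%N))).
have IH1 := IH jR' 1%N isT.
set c := 2 * INR k / 2 ^ j in IH4 IH1.
have Hc : 0 <= c by rewrite /c; apply: Rle_mult_inv_pos; [lra | apply: pow_lt; lra].
have Hc' : 2 * INR k / 2 ^ j.+1 = c / 2 by rewrite /c /=; field; apply: pow_nonzero; lra.
rewrite Hc'.
have Hw : 2 ^ (4 * b).-1 * lam ^ b <= (al / 4) ^ b.
  apply: Rle_trans (_ : 2 ^ (4 * b) * lam ^ b <= _).
    apply: Rmult_le_compat_r; first by apply: pow_le.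
    apply: Rle_pow; [lra | apply/leP; apply: leq_pred].
  rewrite pow_mult -Rpow_mult_distr; apply: pow_incr.
  split; first by apply: Rmult_le_pos; [simpl; lra | ].
  simpl; lra.
set w := (al / 4) ^ b in Hw.
have Hw0 : 0 <= w by apply: pow_le; lra.
have Hu1 : 0 <= u (j * d)%N 1 by apply: u_nonneg => //; apply: leq_trans tn; apply: leq_mul.
set A := al ^ b.
have HA : 0 <= A <= al.
  split; first by apply: pow_le; lra.
  rewrite /A -{2}(pow_1 al); apply: pow_decr => //; lra.
have HwA : 0 <= w <= A / 4.
  split => //; rewrite /w /A -div_pow.
  have H4 : 4 <= 4 ^ b by rewrite -{1}(pow_1 4); apply: Rle_pow; [lra | apply/leP].
  apply: Rmult_le_compat_l; first by apply: pow_le; lra.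
  apply: Rinv_le_contravar => //; lra.
have HA4 : al ^ (4 * b) = A ^ 4 by rewrite /A (mulnC 4%N b) pow_mult.
rewrite HA4 in IH4.
have HI : (if (expn 4 j * 1 <= k)%N then 1 else 0) = 0 \/
   ((if (expn 4 j * 1 <= k)%N then 1 else 0) = 1 /\ 2 <= c).
  case: ifP => Hj; [right; split => // | by left].
  have := natRle Hj; rewrite muln1 natRexp => H4.
  rewrite /c; apply: (Rmult_le_reg_r (2 ^ j)); first by apply: pow_lt; lra.
  rewrite /Rdiv Rmult_assoc Rinv_l; last by apply: pow_nonzero; lra.
  have : 1 <= 2 ^ j by rewrite -(pow1 j); apply: pow_incr; lra.
  have : INR 4 ^ j = 2 ^ j * 2 ^ j by rewrite -Rpow_mult_distr /=; congr (_ ^ _); ring.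
  nra.
have HI4 : (if (expn 4 j.+1 * b <= k)%N then 1 else 0) = (if (expn 4 j * (4 * b) <= k)%N then 1 else 0).
  by rewrite expnS mulnA (mulnC 4%N (expn 4 j)).
rewrite HI4.
apply: Rle_trans H _.
apply: Rle_trans (_ : (if (expn 4 j * (4 * b) <= k)%N then 1 else 0) + A ^ 4 * c
   + ((if (expn 4 j * 1 <= k)%N then 1 else 0) + al * c) * w <= _); last first.
  rewrite (_ : A * (c / 2) = A * c / 2); last by field.
  apply: step_ineq => //; lra.
apply: Rplus_le_compat => //.
apply: Rle_trans (Rmult_le_compat_l _ _ _ Hu1 Hw) _.
apply: Rmult_le_compat_r => //.
by rewrite pow_1 in IH1.
Qed.

Lemma u_mono1 (sg t : nat) : (sg <= t)%N -> (t <= n)%N -> (0 < l)%N -> u t 1 <= u sg 1.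
Proof.
move=> st tn l0.
have Hnat := round_nat 0 (isT : (0 < 1)%N) st.
rewrite big_pred0 in Hnat; last by move=> [[|i] Hi].
rewrite muln0 addn0 in Hnat.
have HR := natRle Hnat.
rewrite !natRM in HR.
set N := (n - sg)%N; set D := (t - sg)%N.
have Hb := binom_id st.
have HbR : INR 'C(n, t) * INR 'C(t, sg) = INR 'C(n, sg) * INR 'C(N, D) by rewrite -!natRM Hb.
have pos : forall m p : nat, (p <= m)%N -> 0 < INR 'C(m, p).
  by move=> m p pm; apply: lt_0_INR; apply/ltP; rewrite bin_gt0.
have HLn : 0 < INR l by apply: lt_0_INR; apply/ltP.
have Cnt := pos n t tn.
have Cts := pos t sg st.
have Cns := pos n sg (leq_trans st tn).
have CND : 0 < INR 'C(N, D) by apply: pos; rewrite /N /D; lia.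
rewrite /u.
set Bt := INR (Bn t 1) in HR *; set Bs := INR (Bn sg 1) in HR *.
apply: (Rmult_le_reg_r (INR l * INR 'C(n, sg) * INR 'C(N, D))).
  by repeat apply: Rmult_lt_0_compat.
have E1 : Bt / (INR l * INR 'C(n, t)) * (INR l * INR 'C(n, sg) * INR 'C(N, D))
   = INR 'C(t, sg) * Bt.
  rewrite (_ : INR l * INR 'C(n, sg) * INR 'C(N, D) = INR l * (INR 'C(n, t) * INR 'C(t, sg))); last by rewrite HbR; ring.
  field; split; lra.
have E2 : Bs / (INR l * INR 'C(n, sg)) * (INR l * INR 'C(n, sg) * INR 'C(N, D)) = INR 'C(N, D) * Bs.
  field; split; lra.
rewrite E1 E2; apply: (Rmult_le_reg_l (INR l)) => //; rewrite -!Rmult_assoc; exact: HR.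
Qed.

End RealPart.
End Comb.

Lemma div_le_cross (a b c e : R) : (0 < b)%R -> (0 < e)%R -> (a * e <= c * b)%R -> (a / b <= c / e)%R.
Proof.
move=> Hb He H.
apply: (Rmult_le_reg_r (b * e)); first by apply: Rmult_lt_0_compat.
have -> : (a / b * (b * e) = a * e)%R by field; lra.
have -> : (c / e * (b * e) = c * b)%R by field; lra.
exact: H.
Qed.

Lemma ceil_nat (x : R) : (0 < x)%R -> exists R0 : nat, (x < INR R0 <= x + 1)%R.
Proof.
move=> x0; have [H1 H2] := archimed x.
exists (Z.to_nat (up x)).
have Hu : (0 <= up x)%Z by apply: le_IZR; lra.
rewrite INR_IZR_INZ Znat.Z2Nat.id //; lra.
Qed.

Theorem lemma3 :
  exists beta : R, (1 < beta)%R /\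
  forall (k : nat) (gamma eps : R) (n l : nat) (S : 'I_l -> {set 'I_n}) (s : nat),
    (1 <= k)%N ->
    (0 < gamma < 1/2)%R -> (0 < eps < 1/2)%R ->
    let r := (beta * (1 / gamma) * log2 (INR k / eps))%R in
    spread k r S ->
    uniform_k k S ->
    (r ^ k <= INR l)%R ->
    (gamma * INR n <= INR s)%R -> (s <= n)%N ->
    (expected_chi S s < eps)%R /\ (1 - eps < prob_covered S s)%R.
Proof.
exists 512%R; split; first lra.
move=> k gamma eps n l S s k1 Hg He r Hsp Hun Hl Hgs Hsn.
have Hk : forall i, #|S i| = k by exact: Hun.
have HkR : (1 <= INR k)%R by apply: (natRle k1).
have Hln2 : (0 < ln 2)%R by rewrite -ln_1; apply: ln_increasing; lra.
set L := log2 (INR k / eps).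
have HL : (1 < L)%R.
  rewrite /L /log2; apply: (Rmult_lt_reg_r (ln 2)) => //.
  rewrite /Rdiv Rmult_assoc Rinv_l; last lra.
  rewrite Rmult_1_r Rmult_1_l; apply: ln_increasing; first lra.
  apply: (Rmult_lt_reg_r eps); first lra.
  rewrite Rmult_assoc Rinv_l; lra.
have Hr : (0 < r)%R.
  rewrite /r -/L; apply: Rmult_lt_0_compat; last lra.
  apply: Rmult_lt_0_compat; first lra.
  apply: Rdiv_lt_0_compat; lra.
have HgR : (gamma * r = 512 * L)%R by rewrite /r -/L; field; lra.
have Hlpos : (0 < l)%N.
  have : (0 < INR l)%R by apply: Rlt_le_trans Hl; apply: pow_lt.
  by move=> H; apply/ltP; apply: INR_lt; rewrite /=; lra.
have [R0 [HR1 HR2]] := @ceil_nat (2 * L)%R ltac:(lra).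
have R0pos : (0 < R0)%N by apply/ltP; apply: INR_lt; rewrite /=; lra.
set d := (s %/ R0)%N.
have Rd : (R0 * d <= n)%N by apply: leq_trans Hsn; rewrite mulnC; apply: leq_trunc_div.
have Hceil : (s < (d + 1) * R0)%N by rewrite addn1; apply: ltn_ceil.
set al := (64 * INR R0 / (gamma * r))%R.
have Hal_eq : al = (INR R0 / (8 * L))%R by rewrite /al HgR; field; lra.
have Hal : (0 <= al <= 1/2)%R.
  rewrite Hal_eq; split.
    apply: Rle_mult_inv_pos; [apply: pos_INR | lra].
  apply: div_le_cross; lra.
have Hlam : (INR n / (INR (d + 1) * r) <= al / 64)%R.
  rewrite (_ : (al / 64 = INR R0 / (gamma * r))%R); last by rewrite /al; field; lra.
  have Hd1 : (0 < INR (d + 1))%R by apply: lt_0_INR; apply/ltP; rewrite addn1.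
  apply: div_le_cross; first by apply: Rmult_lt_0_compat.
    by apply: Rmult_lt_0_compat; lra.
  have H1 := natRlt Hceil; rewrite natRM in H1.
  have H2 : (gamma * INR n <= INR (d + 1) * INR R0)%R by lra.
  have := Rmult_le_compat_r r _ _ (Rlt_le _ _ Hr) H2; lra.
have Hinv := inv_rounds Hk Hsp Hr Hl Hlpos Rd Hal Hlam (leqnn R0) (isT : (0 < 1)%N).
set K := (INR k / eps)%R.
have HK : (2 * INR k <= K)%R.
  rewrite /K; apply: (Rmult_le_reg_r eps); first lra.
  have -> : (INR k / eps * eps = INR k)%R by field; lra.
  nra.
have HKpos : (0 < K)%R by lra.
have HP : (K ^ 2 < 2 ^ R0)%R.
  apply: ln_lt_inv; [by apply: pow_lt | by apply: pow_lt; lra |].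
  rewrite !ln_pow //; last lra.
  have : (2 * ln K < INR R0 * ln 2)%R.
    have E : (2 * ln K = 2 * L * ln 2)%R by rewrite /L /log2 -/K; field; lra.
    rewrite E; apply: Rmult_lt_compat_r => //.
  by rewrite /=; lra.
have H4 : (expn 4 R0 * 1 <= k)%N = false.
  apply/negbTE/negP => H; have := natRle H; rewrite muln1 natRexp => H5.
  have : (2 ^ R0 <= INR 4 ^ R0)%R by apply: pow_incr; rewrite /=; lra.
  have : (INR k <= K ^ 2)%R by rewrite /=; nra.
  lra.
rewrite H4 pow_1 Rplus_0_l in Hinv.
have Hmono := u_mono1 S (leq_trans (eq_leq (mulnC R0 d)) (leq_trunc_div s R0)) Hsn Hlpos.
have HkP : (INR k * INR k < eps * 2 ^ R0)%R.
  have : (eps * K ^ 2 < eps * 2 ^ R0)%R by apply: Rmult_lt_compat_l; lra.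
  have E : (eps * K ^ 2 = INR k * K)%R by rewrite /K /=; field; lra.
  nra.
have HPpos : (0 < 2 ^ R0)%R by apply: pow_lt; lra.
have Hus : (u S s 1 < eps / INR k)%R.
  apply: Rle_lt_trans Hmono _; apply: Rle_lt_trans Hinv _.
  apply: Rle_lt_trans (_ : (1/2 * (2 * INR k / 2 ^ R0) < _)%R).
    by apply: Rmult_le_compat_r; [apply: Rle_mult_inv_pos; lra | lra].
  have -> : (1 / 2 * (2 * INR k / 2 ^ R0) = INR k / 2 ^ R0)%R by field; lra.
  apply: (Rmult_lt_reg_r (INR k * 2 ^ R0)); first by apply: Rmult_lt_0_compat; lra.
  have -> : (INR k / 2 ^ R0 * (INR k * 2 ^ R0) = INR k * INR k)%R by field; lra.
  have -> : (eps / INR k * (INR k * 2 ^ R0) = eps * 2 ^ R0)%R by field; lra.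
  exact: HkP.
have HC : (0 < INR 'C(n, s))%R by apply: lt_0_INR; apply/ltP; rewrite bin_gt0.
have HLl : (0 < INR l)%R by apply: lt_0_INR; apply/ltP.
set U := #|[set W : {set 'I_n} | (#|W| == s) && ~~ cov S W]|.
have Hu : u S s 1 = (INR U / INR 'C(n, s))%R.
  rewrite /u Bn1 natRM; change (INR l * INR U / (INR l * INR 'C(n, s)) = INR U / INR 'C(n, s))%R; field; lra.
rewrite Hu in Hus.
split.
  rewrite /expected_chi.
  apply: Rle_lt_trans (_ : (INR (k * Bn S s 1) / (INR l * INR 'C(n, s)) < _)%R).
    apply: Rmult_le_compat_r; first by apply: Rlt_le; apply: Rinv_0_lt_compat; apply: Rmult_lt_0_compat.
    by apply: natRle; apply: sum_chi.
  rewrite Bn1 !natRM.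
  have -> : (INR k * (INR l * INR U) / (INR l * INR 'C(n, s)) = INR k * (INR U / INR 'C(n, s)))%R.
    by field; lra.
  apply: Rlt_le_trans (_ : (INR k * (eps / INR k) <= _)%R).
    by apply: Rmult_lt_compat_l; lra.
  right; field; lra.
rewrite /prob_covered.
have Hcs := count_split S s.
have E : (INR #|[set W : {set 'I_n} | (#|W| == s) && [exists y, S y \subset W]]| = INR 'C(n, s) - INR U)%R.
  have HcsR : (INR #|[set W : {set 'I_n} | (#|W| == s) && [exists y, S y \subset W]]| + INR U = INR 'C(n, s))%R by rewrite -natRD -Hcs.
  lra.
rewrite E.
have -> : ((INR 'C(n, s) - INR U) / INR 'C(n, s) = 1 - INR U / INR 'C(n, s))%R by field; lra.
have : (eps / INR k <= eps)%R.
  apply: (Rmult_le_reg_r (INR k)); first lra.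
  have -> : (eps / INR k * INR k = eps)%R by field; lra.
  nra.
lra.
Qed.
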